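(* Let $\mathcal G=\mathfrak g_1\oplus\mathfrak g_2$ and $\Theta\in C^1_{\mathsf{LTS}}(\mathcal G,\mathcal G)$ with decomposition $\Theta=\hat\phi_1+\hat\mu_1+\hat\psi+\hat\mu_2+\hat\phi_2$ in which $\hat\phi_1=\hat\phi_2=0$. Then $(\mathcal G,\Theta)$ is a Lie triple system (so that $(\mathcal G,\mathfrak g_1,\mathfrak g_2)$ is a twilled Lie triple system) if and only if $\frac12[\hat\mu_1,\hat\mu_1]_{\mathsf{LTS}}=0$, $[\hat\psi,\hat\mu_1]_{\mathsf{LTS}}=0$, $[\hat\mu_1,\hat\mu_2]_{\mathsf{LTS}}+\frac12[\hat\psi,\hat\psi]_{\mathsf{LTS}}=0$, $[\hat\psi,\hat\mu_2]_{\mathsf{LTS}}=0$, $\frac12[\hat\mu_2,\hat\mu_2]_{\mathsf{LTS}}=0$.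
   Context: All vector spaces are over a field of characteristic $0$. A Lie triple system is a vector space with a trilinear bracket satisfying $[x,x,y]=0$, $[x,y,z]+[y,z,x]+[z,x,y]=0$ and $[x,y,[z,w,t]]=[[x,y,z],w,t]+[z,[x,y,w],t]+[z,w,[x,y,t]]$; a twilled Lie triple system is a Lie triple system on $\mathcal G=\mathfrak g_1\oplus\mathfrak g_2$ in which $\mathfrak g_1$ and $\mathfrak g_2$ are subalgebras. Cochains: $C^p(\mathcal G,\mathcal G)=\mathrm{Hom}(\otimes^{2p+1}\mathcal G,\mathcal G)$, arguments $(\mathfrak X_1,\dots,\mathfrak X_p,x)$, $\mathfrak X_i=x_i\otimes y_i$; for $P\in C^p,Q\in C^q$, $(P\circ Q)(\mathfrak X_1,\dots,\mathfrak X_{p+q},x)=\sum_{k=1}^p(-1)^{(k-1)q}\sum_{\sigma\in\mathbb S(k-1,q)}(-1)^\sigma P(\mathfrak X_{\sigma(1)},\dots,\mathfrak X_{\sigma(k-1)},Q(\mathfrak X_{\sigma(k)},\dots,\mathfrak X_{\sigma(k+q-1)},x_{k+q})\otimes y_{k+q},\mathfrak X_{k+q+1},\dots,x)+\sum_{k=1}^p(-1)^{(k-1)q}\sum_{\sigma\in\mathbb S(k-1,q)}(-1)^\sigma P(\mathfrak X_{\sigma(1)},\dots,\mathfrak X_{\sigma(k-1)},x_{k+q}\otimes Q(\mathfrak X_{\sigma(k)},\dots,\mathfrak X_{\sigma(k+q-1)},y_{k+q}),\mathfrak X_{k+q+1},\dots,x)+\sum_{\sigma\in\mathbb S(p,q)}(-1)^\sigma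 P(\mathfrak X_{\sigma(1)},\dots,\mathfrak X_{\sigma(p)},Q(\mathfrak X_{\sigma(p+1)},\dots,\mathfrak X_{\sigma(p+q)},x))$, $[P,Q]=P\circ Q-(-1)^{pq}Q\circ P$. $C^p_{\mathsf{LTS}}$ is the subspace of $P$ with $P(\dots,x,x,y)=0$ and vanishing cyclic sum in the last three slots; bracket $[\cdot,\cdot]_{\mathsf{LTS}}$. $\Theta\in C^1_{\mathsf{LTS}}$ is a Lie triple system bracket iff $[\Theta,\Theta]_{\mathsf{LTS}}=0$. Decomposition: with $[a,b,c]_i$ the $\mathfrak g_i$-component of $\Theta(a,b,c)$, $x,y,z\in\mathfrak g_1$, $u,v,w\in\mathfrak g_2$: $\hat\phi_1((x,u),(y,v),(z,w))=(0,[x,y,z]_2)$; $\hat\mu_1=([x,y,z]_1,[x,y,w]_2+[u,y,z]_2-[v,x,z]_2)$; $\hat\psi=([x,y,w]_1+[u,y,z]_1-[v,x,z]_1,[u,v,z]_2+[x,v,w]_2-[y,u,w]_2)$; $\hat\mu_2=([u,v,z]_1+[x,v,w]_1-[y,u,w]_1,[u,v,w]_2)$; $\hat\phi_2=([u,v,w]_1,0)$. *)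

(* Defs.v *)
From HB Require Import structures.
From mathcomp Require Import all_boot all_order all_algebra.
Set Implicit Arguments. Unset Strict Implicit. Unset Printing Implicit Defensive.
Import Order.TTheory GRing.Theory Num.Theory.
Local Open Scope ring_scope.

Section LTS.
Variable R : fieldType.

Section Bracket.
Variable V : lmodType R.

Definition trilinear (T : V -> V -> V -> V) : Prop :=
  [/\ forall (a : R) x x' y z, T (a *: x + x') y z = a *: T x y z + T x' y z,
      forall (a : R) x y y' z, T x (a *: y + y') z = a *: T x y z + T x y' z &
      forall (a : R) x y z z', T x y (a *: z + z') = a *: T x y z + T x y z'].

Definition is_LTS (T : V -> V -> V -> V) : Prop :=
  [/\ trilinear T,
      forall x y, T x x y = 0,
      forall x y z, T x y z + T y z x + T z x y = 0 &
      forall x y z w t,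
        T x y (T z w t) = T (T x y z) w t + T z (T x y w) t + T z w (T x y t)].

Definition in_C1_LTS (T : V -> V -> V -> V) : Prop :=
  [/\ trilinear T,
      forall x y, T x x y = 0 &
      forall x y z, T x y z + T y z x + T z x y = 0].

(* A cochain P in C^p(V,V) is a function of (X_1,...,X_p, x) where each
   X_i = x_i (x) y_i is represented by the pair (x_i, y_i). *)
Definition cochain := seq (V * V) -> V -> V.

Fixpoint bseqs (n : nat) : seq (seq bool) :=
  if n is n'.+1 then [seq true :: s | s <- bseqs n'] ++ [seq false :: s | s <- bseqs n']
  else [:: [::]].

(* A shuffle sigma in S(i,j) of positions 0..i+j-1 is encoded by the mask m
   (length i+j, i trues): sigma(1..i) = positions of trues (increasing),
   sigma(i+1..i+j) = positions of falses (increasing).  Its number of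
   inversions is the number of pairs (false at a, true at b) with a < b. *)
Fixpoint shinv (m : seq bool) : nat :=
  if m is b :: m' then (if b then 0%N else count id m') + shinv m' else 0%N.

Definition shsign (m : seq bool) : R := (-1) ^+ shinv m.

(* P o Q for P in C^p, Q in C^q, evaluated on (X_1,...,X_{p+q}, x).
   The summation index k of the paper is k.+1 here (k : 'I_p).
   NOTE: the factor (-1)^(p*q) on the last sum. *)
Definition comp (p q : nat) (P Q : cochain) : cochain := fun Xs x =>
  \sum_(k < p) (-1) ^+ (k * q) *:
     \sum_(m <- bseqs (k + q) | count id m == k)
        shsign m *:
        (let pre := take (k + q) Xs in
         let X := nth (0, 0) Xs (k + q) in
         let post := drop (k + q).+1 Xs in
         P (mask m pre ++ (Q (mask (map negb m) pre) X.1, X.2) :: post) x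
       + P (mask m pre ++ (X.1, Q (mask (map negb m) pre) X.2) :: post) x)
  + (-1) ^+ (p * q) *:
     \sum_(m <- bseqs (p + q) | count id m == p)
        shsign m *: P (mask m Xs) (Q (mask (map negb m) Xs) x).

Definition bracket (p q : nat) (P Q : cochain) : cochain := fun Xs x =>
  comp p q P Q Xs x - (-1) ^+ (p * q) *: comp q p Q P Xs x.

(* [.,.]_LTS is the restriction of [.,.] to the LTS cochains *)
Definition bracketLTS := bracket.

Definition cochain1 (T : V -> V -> V -> V) : cochain := fun Xs x =>
  T (head (0, 0) Xs).1 (head (0, 0) Xs).2 x.

Definition cadd (P Q : cochain) : cochain := fun Xs x => P Xs x + Q Xs x.

Definition C2_zero (F : cochain) : Prop :=
  forall X1 X2 : V * V, forall x : V, F [:: X1; X2] x = 0.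

End Bracket.

Section Decomp.
Variables g1 g2 : lmodType R.
Local Notation G := (g1 * g2)%type.
Variable T : G -> G -> G -> G.

Definition in1 (x : g1) : G := (x, 0).
Definition in2 (u : g2) : G := (0, u).
Definition br1 a b c : g1 := (T a b c).1.
Definition br2 a b c : g2 := (T a b c).2.

Definition hphi1 (A B C : G) : G :=
  let: (x, u) := A in let: (y, v) := B in let: (z, w) := C in
  (0, br2 (in1 x) (in1 y) (in1 z)).
Definition hmu1 (A B C : G) : G :=
  let: (x, u) := A in let: (y, v) := B in let: (z, w) := C in
  (br1 (in1 x) (in1 y) (in1 z),
   br2 (in1 x) (in1 y) (in2 w) + br2 (in2 u) (in1 y) (in1 z)
     - br2 (in2 v) (in1 x) (in1 z)).
Definition hpsi (A B C : G) : G :=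
  let: (x, u) := A in let: (y, v) := B in let: (z, w) := C in
  (br1 (in1 x) (in1 y) (in2 w) + br1 (in2 u) (in1 y) (in1 z)
     - br1 (in2 v) (in1 x) (in1 z),
   br2 (in2 u) (in2 v) (in1 z) + br2 (in1 x) (in2 v) (in2 w)
     - br2 (in1 y) (in2 u) (in2 w)).
Definition hmu2 (A B C : G) : G :=
  let: (x, u) := A in let: (y, v) := B in let: (z, w) := C in
  (br1 (in2 u) (in2 v) (in1 z) + br1 (in1 x) (in2 v) (in2 w)
     - br1 (in1 y) (in2 u) (in2 w),
   br2 (in2 u) (in2 v) (in2 w)).
Definition hphi2 (A B C : G) : G :=
  let: (x, u) := A in let: (y, v) := B in let: (z, w) := C in
  (br1 (in2 u) (in2 v) (in2 w), 0).

End Decomp.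
End LTS.

(* Main.v *)
Require Import Defs.
From HB Require Import structures.
From mathcomp Require Import all_boot all_order all_algebra zify.
Import GRing.Theory.
Local Open Scope ring_scope.

Set Implicit Arguments. Unset Strict Implicit.


Section Gen.
Variable R : fieldType.
Variable V : lmodType R.

Section Tri.
Variables (T : V -> V -> V -> V) (HT : trilinear T).
Lemma T01 y z : T 0 y z = 0.
Proof. case: HT => H _ _; have := H (-1) 0 0 y z. by rewrite scaler0 addr0 scaleN1r addNr. Qed.
Lemma T02 x z : T x 0 z = 0.
Proof. case: HT => _ H _; have := H (-1) x 0 0 z. by rewrite scaler0 addr0 scaleN1r addNr. Qed.
Lemma T03 x y : T x y 0 = 0.
Proof. case: HT => _ _ H; have := H (-1) x y 0 0. by rewrite scaler0 addr0 scaleN1r addNr. Qed.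
Lemma TD1 x x' y z : T (x + x') y z = T x y z + T x' y z.
Proof. case: HT => H _ _; have := H 1 x x' y z. by rewrite !scale1r. Qed.
Lemma TD2 x y y' z : T x (y + y') z = T x y z + T x y' z.
Proof. case: HT => _ H _; have := H 1 x y y' z. by rewrite !scale1r. Qed.
Lemma TD3 x y z z' : T x y (z + z') = T x y z + T x y z'.
Proof. case: HT => _ _ H; have := H 1 x y z z'. by rewrite !scale1r. Qed.
Lemma TZ1 a x y z : T (a *: x) y z = a *: T x y z.
Proof. case: HT => H _ _; have := H a x 0 y z. by rewrite !addr0 T01 addr0. Qed.
Lemma TZ2 a x y z : T x (a *: y) z = a *: T x y z.
Proof. case: HT => _ H _; have := H a x y 0 z. by rewrite !addr0 T02 addr0. Qed.
Lemma TZ3 a x y z : T x y (a *: z) = a *: T x y z.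
Proof. case: HT => _ _ H; have := H a x y z 0. by rewrite !addr0 T03 addr0. Qed.
Lemma TN1 x y z : T (- x) y z = - T x y z.
Proof. by rewrite -scaleN1r TZ1 scaleN1r. Qed.
Lemma TN2 x y z : T x (- y) z = - T x y z.
Proof. by rewrite -scaleN1r TZ2 scaleN1r. Qed.
Lemma TN3 x y z : T x y (- z) = - T x y z.
Proof. by rewrite -scaleN1r TZ3 scaleN1r. Qed.
End Tri.

Lemma lin_sum (f : V -> V) : (forall a x y, f (a *: x + y) = a *: f x + f y) ->
  forall n (c : 'I_n -> R) (w : 'I_n -> V),
  f (\sum_(j < n) c j *: w j) = \sum_(j < n) c j *: f (w j).
Proof.
move=> H; have f0 : f 0 = 0.
  by have := H (-1) 0 0; rewrite scaler0 addr0 scaleN1r addNr.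
elim=> [|n IH] c w; first by rewrite !big_ord0.
rewrite !big_ord_recr /= addrC H IH addrC //.
Qed.

Lemma sum1 (T : V -> V -> V -> V) : trilinear T -> forall n c w y z,
  T (\sum_(j < n) c j *: w j) y z = \sum_(j < n) c j *: T (w j) y z.
Proof. by case=> H _ _ n c w y z; apply: (@lin_sum (fun x => T x y z)). Qed.
Lemma sum2 (T : V -> V -> V -> V) : trilinear T -> forall n c w x z,
  T x (\sum_(j < n) c j *: w j) z = \sum_(j < n) c j *: T x (w j) z.
Proof. by case=> _ H _ n c w x z; apply: (@lin_sum (fun y => T x y z)). Qed.
Lemma sum3 (T : V -> V -> V -> V) : trilinear T -> forall n c w x y,
  T x y (\sum_(j < n) c j *: w j) = \sum_(j < n) c j *: T x y (w j).
Proof. by case=> _ _ H n c w x y; apply: (@lin_sum (fun z => T x y z)). Qed.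

Definition FF (P Q : V -> V -> V -> V) a1 b1 a2 b2 c :=
  P (Q a1 b1 a2) b2 c + P a2 (Q a1 b1 b2) c - P a1 b1 (Q a2 b2 c) + P a2 b2 (Q a1 b1 c).

Definition psum n (t : R) (P : nat -> V -> V -> V -> V) :=
  fun a b c => \sum_(i < n) t ^+ i *: P i a b c.

Lemma FF_expand n (P : nat -> V -> V -> V -> V) (t : R) :
  (forall i, trilinear (P i)) -> forall a1 b1 a2 b2 c,
  FF (psum n t P) (psum n t P) a1 b1 a2 b2 c =
  \sum_(i < n) \sum_(j < n) t ^+ (i + j)%N *: FF (P i) (P j) a1 b1 a2 b2 c.
Proof.
move=> HP a1 b1 a2 b2 c; rewrite /FF /psum.
under eq_bigr => i _ do rewrite (sum1 (HP i)) scaler_sumr.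
under [X in _ + X - _ + _ = _]eq_bigr => i _ do rewrite (sum2 (HP i)) scaler_sumr.
under [X in _ + _ - X + _ = _]eq_bigr => i _ do rewrite (sum3 (HP i)) scaler_sumr.
under [X in _ + _ - _ + X = _]eq_bigr => i _ do rewrite (sum3 (HP i)) scaler_sumr.
symmetry.
under [X in X = _]eq_bigr => i _ do under eq_bigr => j _ do rewrite exprD -scalerA !scalerDr !scalerN.
under [X in X = _]eq_bigr => i _ do rewrite !big_split /= sumrN.
by rewrite !big_split /= sumrN.
Qed.

Lemma reindex5 (X : nat -> nat -> V) (t : R) :
  \sum_(i < 3) \sum_(j < 3) t ^+ (i + j)%N *: X i j =
  \sum_(k < 5) t ^+ k *: (\sum_(i < 3) \sum_(j < 3 | (i + j == k)%N) X i j).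
Proof.
symmetry.
under eq_bigr => k _ do rewrite scaler_sumr.
under eq_bigr => k _ do under eq_bigr => i _ do rewrite scaler_sumr big_mkcond /=.
rewrite exchange_big /=; apply: eq_bigr => i _.
rewrite exchange_big /=; apply: eq_bigr => j _.
have lt : (i + j < 5)%N by have := ltn_ord i; have := ltn_ord j; lia.
rewrite (bigD1 (Ordinal lt)) //= eqxx big1 ?addr0 // => k.
rewrite -val_eqE /= eq_sym => /negbTE ->; by [].
Qed.

Lemma interp n (t : 'I_n -> R) : injective t -> exists al : 'M[R]_n,
  forall (v : 'I_n -> V) i, v i = \sum_(m < n) al i m *: \sum_(k < n) t m ^+ k *: v k.
Proof.
move=> tinj.
pose W := (Vandermonde n (\row_m t m))^T.
have WU : W \in unitmx.
  rewrite unitmxE det_tr det_Vandermonde unitfE.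
  rewrite prodf_seq_neq0; apply/allP => i _ /=.
  rewrite prodf_seq_neq0; apply/allP => j _ /=.
  apply/implyP => lij; rewrite !mxE subr_eq0.
  apply/eqP => /tinj eij; by rewrite eij ltnn in lij.
exists (invmx W) => v i.
under eq_bigr => m _ do rewrite scaler_sumr.
rewrite exchange_big /=.
have E : forall k : 'I_n, \sum_(m < n) invmx W i m * t m ^+ k = (invmx W *m W) i k.
  move=> k; rewrite !mxE; apply: eq_bigr => m _; by rewrite !mxE.
under eq_bigr => k _ do under eq_bigr => m _ do rewrite scalerA.
under eq_bigr => k _ do rewrite -scaler_suml E.
rewrite mulVmx // (bigD1 i) //= big1 ?addr0; first by rewrite mxE eqxx scale1r.
by move=> k /negbTE nk; rewrite mxE eq_sym nk scale0r.
Qed.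

Lemma vanish n (t : 'I_n -> R) (v : 'I_n -> V) : injective t ->
  (forall m, \sum_(k < n) t m ^+ k *: v k = 0) -> forall i, v i = 0.
Proof.
move=> /interp [al Hal] H i; rewrite Hal big1 // => m _; by rewrite H scaler0.
Qed.

Lemma bracket11 (P Q : V -> V -> V -> V) X1 X2 x :
  bracket 1 1 (cochain1 P) (cochain1 Q) [:: X1; X2] x =
  FF P Q X1.1 X1.2 X2.1 X2.2 x + FF Q P X1.1 X1.2 X2.1 X2.2 x.
Proof.
rewrite /bracket /Defs.comp !big_ord1 /=.
rewrite !big_cons !big_nil /= /shsign /cochain1 /= !expr0 !expr1 !scale1r !addr0 !scaleN1r.
rewrite /FF opprK !opprB !addrA.
by rewrite [LHS](ACl (1*2*4*3*5*6*8*7)).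
Qed.

Lemma LTS_FF (T : V -> V -> V -> V) : in_C1_LTS T ->
  (is_LTS T <-> forall a1 b1 a2 b2 c, FF T T a1 b1 a2 b2 c = 0).
Proof.
case=> Htri H0 Hc; split.
  by case=> _ _ _ FI a1 b1 a2 b2 c; rewrite /FF addrAC (FI a1 b1 a2 b2 c) subrr.
move=> H; split => // x y z w t; have := H x y z w t.
by rewrite /FF addrAC => /eqP; rewrite subr_eq0 => /eqP ->.
Qed.


Lemma tri_ext (P Q : V -> V -> V -> V) : (forall a b c, P a b c = Q a b c) ->
  trilinear Q -> trilinear P.
Proof. by move=> E [H1 H2 H3]; split=> *; rewrite !E ?H1 ?H2 ?H3. Qed.

Lemma tri_comb n (c : 'I_n -> R) (Q : 'I_n -> V -> V -> V -> V) :
  (forall m, trilinear (Q m)) ->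
  trilinear (fun A B C => \sum_(m < n) c m *: Q m A B C).
Proof.
move=> H; split=> a *.
- under eq_bigr => m _ do rewrite (TD1 (H m)) (TZ1 (H m)) scalerDr scalerA mulrC -scalerA.
  by rewrite big_split /= -scaler_sumr.
- under eq_bigr => m _ do rewrite (TD2 (H m)) (TZ2 (H m)) scalerDr scalerA mulrC -scalerA.
  by rewrite big_split /= -scaler_sumr.
- under eq_bigr => m _ do rewrite (TD3 (H m)) (TZ3 (H m)) scalerDr scalerA mulrC -scalerA.
  by rewrite big_split /= -scaler_sumr.
Qed.

Lemma FF_ext (P P' Q Q' : V -> V -> V -> V) :
  (forall a b c, P a b c = P' a b c) -> (forall a b c, Q a b c = Q' a b c) ->
  forall a1 b1 a2 b2 c, FF P Q a1 b1 a2 b2 c = FF P' Q' a1 b1 a2 b2 c.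
Proof. by move=> HP HQ *; rewrite /FF !HP !HQ. Qed.

Section CC.
Variable X : nat -> nat -> V.
Let C k := \sum_(i < 3) \sum_(j < 3 | (i + j == k)%N) X i j.
Lemma CE : [/\ C 0 = X 0%N 0%N, C 1 = X 0%N 1%N + X 1%N 0%N,
   C 2 = X 0%N 2%N + X 1%N 1%N + X 2%N 0%N, C 3 = X 1%N 2%N + X 2%N 1%N & C 4 = X 2%N 2%N].
Proof.
rewrite /C; split;
 under eq_bigr => i _ do rewrite big_mkcond /=;
 rewrite !big_ord_recr !big_ord0 /= ?add0r ?addr0 //.
Qed.
End CC.

End Gen.

Unset Implicit Arguments. Set Strict Implicit.


Section Spec.
Variable R : fieldType.
Variables g1 g2 : lmodType R.
Local Notation G := (g1 * g2)%type.
Variable Th : G -> G -> G -> G.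
Local Notation i1 := (@in1 R g1 g2).
Local Notation i2 := (@in2 R g1 g2).
Hypothesis HC : in_C1_LTS Th.
Hypothesis Hp1 : forall A B C, hphi1 Th A B C = 0.
Hypothesis Hp2 : forall A B C, hphi2 Th A B C = 0.

Definition sc (t : R) (A : G) : G := (A.1, t *: A.2).
Definition Pm (k : nat) : G -> G -> G -> G :=
  match k with 0 => hmu1 Th | 1 => hpsi Th | _ => hmu2 Th end.

Let HT : trilinear Th. Proof. by case: HC. Qed.

Lemma skew a b c : Th a b c = - Th b a c.
Proof.
case: HC => _ H0 _; have := H0 (a + b) c.
rewrite (TD1 HT) !(TD2 HT) !H0 add0r addr0 => /eqP; by rewrite addr_eq0 => /eqP.
Qed.

Lemma z1 x y z : (Th (i1 x) (i1 y) (i1 z)).2 = 0.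
Proof. by have := Hp1 (x, 0) (y, 0) (z, 0); rewrite /hphi1 /br2 => -[]. Qed.
Lemma z2 u v w : (Th (i2 u) (i2 v) (i2 w)).1 = 0.
Proof. by have := Hp2 (0, u) (0, v) (0, w); rewrite /hphi2 /br1 => -[]. Qed.

Lemma scE t x u : sc t (x, u) = i1 x + t *: i2 u.
Proof. by apply: injective_projections; rewrite /= ?scaler0 ?addr0 ?add0r. Qed.

Lemma F2 t A B C : Th (sc t A) (sc t B) (sc t C) = sc t (psum 3 t Pm A B C).
Proof.
case: A => x u; case: B => y v; case: C => z w.
rewrite !scE /psum !big_ord_recr big_ord0 /= add0r expr0 expr1 scale1r.
rewrite !(TD1 HT, TD2 HT, TD3 HT, TZ1 HT, TZ2 HT, TZ3 HT).
rewrite /hmu1 /hpsi /hmu2 /br1 /br2.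
rewrite (skew (i2 v) (i1 x)) (skew (i1 y) (i2 u)).
apply: injective_projections; rewrite /= ?z1 ?z2.
all: rewrite !opprK ?scaler0 ?addr0 ?add0r !scalerDr !scalerA ?expr2 -?mulrA !addrA.
  by rewrite [LHS](ACl (1*2*5*3*7*4*6)).
by rewrite [LHS](ACl (1*4*2*6*3*5*7)).
Qed.

Hypothesis ch : [pchar R] =i pred0.

Lemma natf_inj a b : a%:R = b%:R :> R -> a = b.
Proof.
have nz n : ((n%:R : R) == 0) = (n == 0)%N by rewrite (pcharf0P _).1.
move=> E; case: (ltngtP a b) => // h.
  by have := nz (b - a)%N; rewrite natrB ?(ltnW h) // -E subrr eqxx subn_eq0 leqNgt h.
by have := nz (a - b)%N; rewrite natrB ?(ltnW h) // E subrr eqxx subn_eq0 leqNgt h.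
Qed.

Lemma two_nz : (2%:R : R) != 0.
Proof. by rewrite (pcharf0P _).1. Qed.

Lemma halfG (y : G) : 2^-1 *: (y + y) = y.
Proof. by rewrite -mulr2n -scaler_nat scalerA mulVf ?two_nz // scale1r. Qed.

Lemma sc_lin t a A B : sc t (a *: A + B) = a *: sc t A + sc t B.
Proof. by apply: injective_projections; rewrite //= scalerDr !scalerA mulrC. Qed.
Lemma sc_add t A B : sc t (A + B) = sc t A + sc t B.
Proof. by apply: injective_projections; rewrite //= scalerDr. Qed.
Lemma sc_opp t A : sc t (- A) = - sc t A.
Proof. by apply: injective_projections; rewrite //= scalerN. Qed.
Lemma sc_inv t A : t != 0 -> sc t^-1 (sc t A) = A.
Proof. by case: A => x u nt; rewrite /sc /= scalerA mulVf // scale1r. Qed.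
Lemma sc1 A : sc 1 A = A.
Proof. by case: A => x u; rewrite /sc /= scale1r. Qed.
Lemma sc0 t : sc t 0 = 0.
Proof. by apply: injective_projections; rewrite //= scaler0. Qed.

Lemma psumE t A B C : t != 0 ->
  psum 3 t Pm A B C = sc t^-1 (Th (sc t A) (sc t B) (sc t C)).
Proof. by move=> nt; rewrite F2 sc_inv. Qed.

Lemma psum_tri t : t != 0 -> trilinear (psum 3 t Pm).
Proof.
move=> nt; apply: (@tri_ext _ _ _ (fun A B C => sc t^-1 (Th (sc t A) (sc t B) (sc t C)))).
  by move=> A B C; apply: psumE.
case: HT => H1 H2 H3; split=> *; by rewrite !sc_lin ?H1 ?H2 ?H3 sc_lin.
Qed.

Definition tp (m : 'I_3) : R := (m.+1)%:R.
Lemma tp_inj : injective tp.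
Proof. by move=> a b /natf_inj [] /val_inj. Qed.
Lemma tp_nz m : tp m != 0.
Proof. by rewrite /tp (pcharf0P _).1. Qed.

Lemma Pm_tri i : trilinear (Pm i).
Proof.
have [al Hal] := interp G tp_inj.
have H (k : 'I_3) : trilinear (Pm k).
  apply: (tri_ext (Q := fun A B C => \sum_(m < 3) al k m *: psum 3 (tp m) Pm A B C)).
    by move=> A B C; rewrite (Hal (fun j : 'I_3 => Pm j A B C) k).
  by apply: tri_comb => m; apply: psum_tri; apply: tp_nz.
case: i => [|[|i]]; [exact: (H ord0) | exact: (H (@Ordinal 3 1 isT)) | exact: (H (@Ordinal 3 2 isT))].
Qed.


Definition XX a1 b1 a2 b2 c (i j : nat) := FF (Pm i) (Pm j) a1 b1 a2 b2 c.
Definition CC a1 b1 a2 b2 c (k : nat) :=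
  \sum_(i < 3) \sum_(j < 3 | (i + j == k)%N) XX a1 b1 a2 b2 c i j.

Lemma FFscale t a1 b1 a2 b2 c :
  FF Th Th (sc t a1) (sc t b1) (sc t a2) (sc t b2) (sc t c) =
  sc t (FF (psum 3 t Pm) (psum 3 t Pm) a1 b1 a2 b2 c).
Proof. by rewrite /FF !F2 -!sc_opp -!sc_add. Qed.

Lemma poly_form t a1 b1 a2 b2 c :
  FF (psum 3 t Pm) (psum 3 t Pm) a1 b1 a2 b2 c =
  \sum_(k < 5) t ^+ k *: CC a1 b1 a2 b2 c k.
Proof. rewrite (FF_expand 3 t Pm_tri) /CC; exact: (@reindex5 _ _ (XX a1 b1 a2 b2 c) t). Qed.

Lemma K1 : is_LTS Th -> forall a1 b1 a2 b2 c (k : 'I_5), CC a1 b1 a2 b2 c k = 0.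
Proof.
move=> /(LTS_FF HC) H a1 b1 a2 b2 c.
have tinj : injective (fun m : 'I_5 => (m.+1)%:R : R).
  by move=> a b /natf_inj [] /val_inj.
apply: (vanish (t := fun m : 'I_5 => (m.+1)%:R : R) (v := fun k : 'I_5 => CC a1 b1 a2 b2 c k) tinj).
move=> m; have nt : (m.+1)%:R != 0 :> R by rewrite (pcharf0P _).1.
rewrite -poly_form -[LHS](sc_inv _ _ nt) -FFscale H; exact: sc0.
Qed.

Lemma K2 : (forall a1 b1 a2 b2 c (k : 'I_5), CC a1 b1 a2 b2 c k = 0) -> is_LTS Th.
Proof.
move=> H; apply/(LTS_FF HC) => a1 b1 a2 b2 c.
have E A B C : Th A B C = psum 3 1 Pm A B C by have := F2 1 A B C; rewrite !sc1.
rewrite (FF_ext E E) poly_form big1 // => k _; by rewrite H scaler0.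
Qed.

End Spec.



Theorem proposition3p14 (R : fieldType) (charR0 : [pchar R] =i pred0)
    (g1 g2 : lmodType R) (Theta : (g1 * g2)%type -> (g1 * g2)%type -> (g1 * g2)%type -> (g1 * g2)%type) :
  in_C1_LTS Theta ->
  (forall A B C, hphi1 Theta A B C = 0) ->
  (forall A B C, hphi2 Theta A B C = 0) ->
  let mu1 := cochain1 (hmu1 Theta) in
  let psi := cochain1 (hpsi Theta) in
  let mu2 := cochain1 (hmu2 Theta) in
  is_LTS Theta <->
  [/\ C2_zero (fun Xs x => 2^-1 *: bracketLTS 1 1 mu1 mu1 Xs x),
      C2_zero (bracketLTS 1 1 psi mu1),
      C2_zero (fun Xs x => bracketLTS 1 1 mu1 mu2 Xs x + 2^-1 *: bracketLTS 1 1 psi psi Xs x),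
      C2_zero (bracketLTS 1 1 psi mu2) &
      C2_zero (fun Xs x => 2^-1 *: bracketLTS 1 1 mu2 mu2 Xs x)].
Proof.
move=> HC Hp1 Hp2 mu1 psi mu2.
have hf := halfG _ g1 g2 charR0.
split.
  move=> L; have K := K1 _ _ _ _ HC Hp1 Hp2 charR0 L.
  have KK a1 b1 a2 b2 c (k : nat) : (k < 5)%N -> CC _ _ _ Theta a1 b1 a2 b2 c k = 0.
    by move=> lt; exact: (K a1 b1 a2 b2 c (Ordinal lt)).
  split=> X1 X2 x; rewrite /bracketLTS /mu1 /psi /mu2 !bracket11 ?hf;
  have := KK X1.1 X1.2 X2.1 X2.2 x;
  case: (CE (XX _ _ _ Theta X1.1 X1.2 X2.1 X2.2 x)) => E0 E1 E2 E3 E4; rewrite /CC.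
  - by move/(_ 0%N isT); rewrite E0.
  - by move/(_ 1%N isT); rewrite E1 addrC.
  - by move/(_ 2%N isT); rewrite E2 addrAC.
  - by move/(_ 3%N isT); rewrite E3.
  - by move/(_ 4%N isT); rewrite E4.
case=> c0 c1 c2 c3 c4; apply: (K2 _ _ _ _ HC Hp1 Hp2 charR0) => a1 b1 a2 b2 c k.
case: (CE (XX _ _ _ Theta a1 b1 a2 b2 c)) => E0 E1 E2 E3 E4; rewrite /CC.
case: k => [[|[|[|[|[|k]]]]] lt] //=.
- by rewrite E0; have := c0 (a1, b1) (a2, b2) c; rewrite /bracketLTS bracket11 hf.
- by rewrite E1 addrC; have := c1 (a1, b1) (a2, b2) c; rewrite /bracketLTS bracket11.
- by rewrite E2 addrAC; have := c2 (a1, b1) (a2, b2) c; rewrite /bracketLTS !bracket11 hf.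
- by rewrite E3; have := c3 (a1, b1) (a2, b2) c; rewrite /bracketLTS bracket11.
- by rewrite E4; have := c4 (a1, b1) (a2, b2) c; rewrite /bracketLTS bracket11 hf.
Qed.
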